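(* Let $r>1$ be an integer and let $M$ be the sub-add move matrix. For every $0\le i\le 2r-1$ and every vertex $(2^{\lfloor i/2\rfloor}x,2^{\lfloor i/2\rfloor}y)\in\mathcal P_i$ (with $x,y$ integers), the vertex $(2^{\lfloor i/2\rfloor}(x-y),2^{\lfloor i/2\rfloor}(x+y))\in\mathcal P_{i+1}$ has exactly two parents in $\Gamma_{M,\,2^r}$.
   Context: The sub-add move matrix is $M=\begin{pmatrix}1&-1\\1&1\end{pmatrix}$. For $n\in\mathbb N$, $\Gamma_{M,\,n}$ is the directed graph with vertex set $\mathbb Z_n^2$ and arcs $((a,b),(a-b,a+b))$ for all $(a,b)\in\mathbb Z_n^2$ (computed mod $n$; loops allowed). If $({\bf v},{\bf w})$ is an arc, ${\bf v}$ is a parent of ${\bf w}$ (in particular $(0,0)$ is a parent of itself). For $n=2^r$: for $0\le t\le r-1$, $\mathcal P_{2t}$ is the set of pairs $(2^tx,2^ty)\in\mathbb Z_{2^r}^2$ with $x,y$ integers exactly one of which is odd, and $\mathcal P_{2t+1}$ is the set of pairs $(2^tx,2^ty)$ with $x,y$ both odd; $\mathcal P_{2r}=\{(0,0)\}$. These sets partition $\mathbb Z_{2^r}^2$. *)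

(* Defs.v *)
From HB Require Import structures.
From mathcomp Require Import all_boot all_order all_algebra.
Set Implicit Arguments. Unset Strict Implicit. Unset Printing Implicit Defensive.
Import Order.TTheory GRing.Theory Num.Theory.
Local Open Scope ring_scope.

(* Vertex set Z_{2^r}^2 (used with r > 1, so 'Z_(2^r) is really Z/2^rZ). *)
Definition vert (r : nat) : finType := ('Z_(2 ^ r) * 'Z_(2 ^ r))%type.

Definition zc (r : nat) (z : int) : 'Z_(2 ^ r) := z%:~R.

Definition subadd (r : nat) (v : vert r) : vert r := (v.1 - v.2, v.1 + v.2).

Definition arc (r : nat) (v w : vert r) : bool := subadd v == w.

Definition parents (r : nat) (w : vert r) : {set vert r} := [set v | arc v w].

Definition oddz (x : int) : bool := ~~ (2 %| x)%Z.

Definition inP (r i : nat) (v : vert r) : Prop :=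
  if (i < 2 * r)%N then
    let t := i./2 in
    exists x y : int,
      v = (zc r ((2 ^ t)%:Z * x), zc r ((2 ^ t)%:Z * y)) /\
      (if odd i then oddz x && oddz y else oddz x (+) oddz y)
  else v = (0, 0).

(* Main.v *)
Require Import Defs.
From HB Require Import structures.
From mathcomp Require Import all_boot all_order all_algebra.
From mathcomp Require Import zify ring.
Import Order.TTheory GRing.Theory Num.Theory.
Local Open Scope ring_scope.

Lemma Zr0 (r : nat) (hr : (1 < r)%N) : ((2 ^ r)%:R : 'Z_(2 ^ r)) = 0.
Proof.
have h1 : (1 < 2 ^ r)%N by rewrite -{1}(expn0 2) ltn_exp2l // ltnW.
by rewrite -(Zp_nat_mod h1) modnn.
Qed.

Lemma card_par (r : nat) (hr : (1 < r)%N) (u w : 'Z_(2 ^ r)) :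
  #|parents ((u - w, u + w) : vert r)| = 2%N.
Proof.
have h1 : (1 < 2 ^ r)%N by rewrite -{1}(expn0 2) ltn_exp2l // ltnW.
have er : (2 ^ r = 2 * 2 ^ (r - 1))%N by rewrite -expnS; congr (_ ^ _)%N; lia.
set h : 'Z_(2 ^ r) := (2 ^ (r - 1))%:R.
have vh : (h : nat) = (2 ^ (r - 1))%N.
  rewrite /h val_Zp_nat // modn_small // er.
  have : (0 < 2 ^ (r - 1))%N by rewrite expn_gt0.
  lia.
have hh : h + h = 0 by rewrite /h -natrD -Zr0 // er; congr _%:R; lia.
have h0 : h != 0.
  apply/eqP => /(congr1 val) /=; rewrite vh.
  have : (0 < 2 ^ (r - 1))%N by rewrite expn_gt0.
  lia.
have hd : forall d : 'Z_(2 ^ r), d + d = 0 -> d = 0 \/ d = h.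
  move=> d /(congr1 val) /= e.
  have lt := ltn_ord d.
  have ec := Zp_cast h1.
  suff [e0|e1] : (d : nat) = 0%N \/ (d : nat) = (2 ^ (r - 1))%N.
  - by left; apply: val_inj; rewrite /= e0.
  - by right; apply: val_inj; rewrite /= e1 -vh.
  move: lt e; move: (nat_of_ord d) => n; rewrite ec er.
  have : (0 < 2 ^ (r - 1))%N by rewrite expn_gt0.
  set P := (2 ^ (r - 1))%N => hP hn.
  have [lt|ge] := ltnP (n + n) (2 * P).
    rewrite modn_small // => e; left; lia.
  have e2 : ((n + n) %% (2 * P) = n + n - 2 * P)%N.
    rewrite -{1}(subnK ge) modnDr modn_small //; lia.
  rewrite e2 => e; right; lia.
have -> : parents ((u - w, u + w) : vert r) = [set (u, w); (u + h, w + h)].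
  apply/setP => [[p q]]; rewrite !inE /Defs.arc /subadd /= !xpair_eqE.
  apply/idP/idP.
    case/andP => /eqP e1 /eqP e2; rewrite /= in e1 e2.
    have hq : q = w + (p - u).
      have -> : q = p - (p - q) by ring.
      rewrite e1; ring.
    have hp : p = u + (p - u) by ring.
    have : (p - u) + (p - u) = 0.
      have -> : (p - u) + (p - u) = (p - q - (u - w)) + (p + q - (u + w)) by ring.
      by rewrite e1 e2 !subrr addr0.
    move: (p - u) hp hq => d -> -> /hd [] ->.
    - by rewrite !addr0 !eqxx.
    - by rewrite !eqxx orbT.
  case/orP => /andP [/eqP -> /eqP ->]; first by rewrite !eqxx.
  apply/andP; split; apply/eqP; first by ring.
  have -> : u + h + (w + h) = u + w + (h + h) by ring.
  by rewrite hh addr0.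
rewrite cards2; suff -> : (u, w) != (u + h, w + h) by [].
apply/negP => /eqP [] e _.
move: h0; rewrite -(addrI u (etrans (addr0 u) e)) eqxx //.
Qed.

Lemma zc2r (r : nat) (hr : (1 < r)%N) (k : int) : zc r ((2 ^ r)%:Z * k) = 0.
Proof. by rewrite /zc intrM; change ((2 ^ r)%:R * k%:~R = 0 :> 'Z_(2 ^ r)); rewrite Zr0 // mul0r. Qed.

Theorem proposition5p4 (r : nat) (hr : (1 < r)%N) (i : nat) (hi : (i <= 2 * r - 1)%N)
  (x y : int) :
  @inP r i (zc r ((2 ^ i./2)%:Z * x), zc r ((2 ^ i./2)%:Z * y)) ->
  @inP r i.+1 (zc r ((2 ^ i./2)%:Z * (x - y)), zc r ((2 ^ i./2)%:Z * (x + y))) /\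
  #|parents (zc r ((2 ^ i./2)%:Z * (x - y)), zc r ((2 ^ i./2)%:Z * (x + y)))| = 2%N.
Proof.
rewrite /zc !mulrBr !mulrDr intrB intrD.
move=> H; split; last by apply: card_par.
move: H; rewrite /inP.
have hi2 : (i < 2 * r)%N by lia.
rewrite hi2 => -[x' [y' [[ex ey] P]]].
rewrite /zc in ex ey; rewrite ex ey -intrB -intrD -mulrBr -mulrDr -/(zc r _) -/(zc r _).
clear ex ey x y.
set t := i./2 in P *.
have ht : i = (odd i + t.*2)%N by rewrite odd_double_half.
case Hodd: (odd i) in P ht.
- move: P; rewrite /oddz => /andP [px py].
  have ex : x' - y' = 2 * ((x' - y') %/ 2)%Z by lia.
  have ey : x' + y' = 2 * ((x' + y') %/ 2)%Z by lia.
  rewrite ht /= add0n doubleK odd_double /= add1n.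
  case: ifP => hlt.
  + exists ((x' - y') %/ 2)%Z, ((x' + y') %/ 2)%Z; split.
      by rewrite {1}ex {1}ey expnS PoszM; congr (zc r _, zc r _); ring.
    lia.
  + have etr : t.+1 = r by move: hlt hi; rewrite ht add1n; lia.
    rewrite ex ey !mulrA -!PoszM -expnSr etr !zc2r //.
- rewrite ht /= add0n uphalf_double odd_double /=.
  have -> : ((t.*2).+1 < 2 * r)%N by move: hi2; rewrite ht add0n -!muln2; lia.
  exists (x' - y'), (x' + y'); split => //.
  move: P; rewrite /oddz; lia.
Qed.
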